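(* The constancy atoms $=\!(\vec v)$ and the inconstancy atoms $\neq\!(\vec v)$ are not definable in $\mathbf{FO}(\mathrm{NE},\sqcup)$.
   Context: Team semantics (lax version). For a structure $\mathfrak M$ with domain $M$, a team $X$ is a (possibly empty) set of assignments $s:V\to M$, $V$ a finite set of variables. Satisfaction for formulas in negation normal form: first-order literal $\alpha$: every $s\in X$ satisfies $\alpha$ (Tarski); $\psi\vee\theta$: $X=Y\cup Z$ with $\mathfrak M\models_Y\psi$, $\mathfrak M\models_Z\theta$; $\psi\wedge\theta$: both; $\exists v\psi$: some $F:X\to\mathcal P(M)\setminus\{\emptyset\}$ with $\mathfrak M\models_{X[F/v]}\psi$, $X[F/v]=\{s[m/v]:s\in X,m\in F(s)\}$; $\forall v\psi$: $\mathfrak M\models_{X[M/v]}\psi$, $X[M/v]=\{s[m/v]:s\in X,m\in M\}$. $\mathfrak M\models_X\mathrm{NE}$ iff $X\ne\emptyset$; $\mathfrak M\models_X\phi\sqcup\psi$ iff $\mathfrak M\models_X\phi$ or $\mathfrak M\models_X\psi$. Constancy: $\mathfrak M\models_X=\!(\vec v)$ iff $s(\vec v)=s'(\vec v)$ for all $s,s'\in X$; inconstancy: $\mathfrak M\models_X\neq\!(\vec v)$ iff there are $s,s'\in X$ with $s(\vec v)\ne s'(\vec v)$. An atom $A\vec v$ is definable in a logic $L$ if there is a formula $\theta(\vec v)\in L$ over the empty vocabulary ($\vec v$ distinct variables) with $\mathfrak M\models_XA\vec v\iff\mathfrak M\models_X\theta(\vec v)$ for all structures $\mathfrak M$ and teams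 $X$ whose domain contains $\vec v$. *)

(* Defs.v *)
From mathcomp Require Import all_boot.
Set Implicit Arguments. Unset Strict Implicit. Unset Printing Implicit Defensive.

(* An assignment with finite domain V into a
   structure with domain M is a partial map [nat -> option M] whose defined
   points are exactly V. *)
Definition assignment (M : Type) := nat -> option M.
Definition team (M : Type) := assignment M -> Prop.

Definition upd (M : Type) (s : assignment M) (v : nat) (m : M) : assignment M :=
  fun y => if y == v then Some m else s y.

(* Formulas of FO(NE, ⊔) over the empty vocabulary, in negation normal form. *)
Inductive form : Type :=
| FEq  : nat -> nat -> form
| FNeq : nat -> nat -> form
| FNE  : form
| FAnd : form -> form -> form
| FOr  : form -> form -> form        (* tensor disjunction *)
| FGor : form -> form -> form        (* global / Boolean disjunction ⊔ *)
| FEx  : nat -> form -> form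
| FAll : nat -> form -> form.

Fixpoint fv (phi : form) : seq nat :=
  match phi with
  | FEq x y | FNeq x y => [:: x; y]
  | FNE => [::]
  | FAnd p q | FOr p q | FGor p q => fv p ++ fv q
  | FEx v p | FAll v p => [seq x <- fv p | x != v]
  end.

(* Lax team semantics. *)
Fixpoint sat (M : Type) (X : team M) (phi : form) : Prop :=
  match phi with
  | FEq x y => forall s, X s -> exists a b, s x = Some a /\ s y = Some b /\ a = b
  | FNeq x y => forall s, X s -> exists a b, s x = Some a /\ s y = Some b /\ a <> b
  | FNE => exists s, X s
  | FAnd p q => sat X p /\ sat X q
  | FOr p q => exists Y Z : team M,
      (forall s, X s <-> Y s \/ Z s) /\ sat Y p /\ sat Z q
  | FGor p q => sat X p \/ sat X q
  | FEx v p => exists F : assignment M -> M -> Prop,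
      (forall s, X s -> exists m, F s m) /\
      sat (fun s' => exists s m, X s /\ F s m /\ s' = upd s v m) p
  | FAll v p => sat (fun s' => exists s m, X s /\ s' = upd s v m) p
  end.

Definition team_dom (M : Type) (X : team M) (V : seq nat) : Prop :=
  forall s, X s -> forall x, (exists a, s x = Some a) <-> x \in V.

Definition const_atom (M : Type) (X : team M) (vs : seq nat) : Prop :=
  forall s s', X s -> X s' -> map s vs = map s' vs.

Definition inconst_atom (M : Type) (X : team M) (vs : seq nat) : Prop :=
  exists s s', X s /\ X s' /\ map s vs <> map s' vs.

Definition definable (A : forall M : Type, team M -> seq nat -> Prop)
    (vs : seq nat) : Prop :=
  exists theta : form, {subset fv theta <= vs} /\
    forall (M : Type), inhabited M ->
    forall (X : team M) (V : seq nat), team_dom X V -> {subset vs <= V} ->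
      (sat X theta <-> A M X vs).

(* Main.v *)
Require Import Defs.
From mathcomp Require Import all_boot.
From Stdlib Require Import Classical.

Definition sim (W : seq nat) (s s' : assignment nat) :=
  (forall x y, x \in W -> y \in W -> (s x = s y <-> s' x = s' y)) /\
  (forall x, x \in W -> (s x = None <-> s' x = None)).

Definition tsim W (X X' : team nat) :=
  (forall s, X s -> exists s', X' s' /\ sim W s s') /\
  (forall s', X' s' -> exists s, X s /\ sim W s s').

Fixpoint vars (phi : form) : seq nat :=
  match phi with
  | FEq x y | FNeq x y => [:: x; y]
  | FNE => [::]
  | FAnd p q | FOr p q | FGor p q => vars p ++ vars q
  | FEx v p | FAll v p => v :: vars p
  end.

Lemma sim_sym W s s' : sim W s s' -> sim W s' s.
Proof.
move=> [H1 H2]; split => [x y hx hy|x hx].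
- have := H1 x y hx hy; tauto.
- have := H2 x hx; tauto.
Qed.

Lemma tsim_sym W X X' : tsim W X X' -> tsim W X' X.
Proof.
move=> [H1 H2]; split.
- move=> s hs; have [s' [h1 h2]] := H2 s hs; exists s'; split=> //; exact: sim_sym.
- move=> s hs; have [s' [h1 h2]] := H1 s hs; exists s'; split=> //; exact: sim_sym.
Qed.

Definition maxv (s : assignment nat) (W : seq nat) :=
  foldr (fun z acc => maxn (odflt 0 (s z)) acc) 0 W.

Lemma maxv_ge s W z k : z \in W -> s z = Some k -> k <= maxv s W.
Proof.
elim: W => [|w W IH] //=.
rewrite in_cons => /orP [/eqP -> | hz] hs.
- by rewrite hs /= leq_maxl.
- exact: leq_trans (IH hz hs) (leq_maxr _ _).
Qed.

Lemma ext W s s' v m : sim W s s' ->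
  exists m', sim W (upd s v m) (upd s' v m').
Proof.
move=> [H1 H2].
case: (classic (exists z, z \in W /\ z != v /\ s z = Some m))
  => [[z [hzW [hzv hz]]] | hno].
- case E: (s' z) => [m'|]; last first.
    by move: (proj2 (H2 z hzW) E); rewrite hz.
  exists m'; split => [x y hx hy | x hx]; rewrite /upd.
  + case: eqP => [ex|nx]; case: eqP => [ey|ny].
    * by split.
    * have h := H1 z y hzW hy; rewrite hz E in h; exact h.
    * have h := H1 x z hx hzW; rewrite hz E in h; exact h.
    * exact: H1.
  + case: eqP => _; [by split | exact: H2].
- exists (maxv s' W).+1; split => [x y hx hy | x hx]; rewrite /upd.
  + have fr : forall y, y \in W -> y != v ->
      ~ (Some m = s y) /\ ~ (Some (maxv s' W).+1 = s' y).
      move=> y0 hy0 ny0; split => h.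
      * by apply: hno; exists y0.
      * have := @maxv_ge _ _ _ _ hy0 (esym h); by rewrite ltnn.
    case: eqP => [ex|nx]; case: eqP => [ey|ny].
    * by split.
    * have [a b] := fr y hy (introN eqP ny); tauto.
    * have [a b] := fr x hx (introN eqP nx).
      split => h; [exfalso; apply: a | exfalso; apply: b]; by rewrite h.
    * exact: H1.
  + case: eqP => _; [by split | exact: H2].
Qed.

Lemma inv phi : forall W, {subset vars phi <= W} -> forall X X',
  tsim W X X' -> sat X phi -> sat X' phi.
Proof.
elim: phi => [x y|x y||p IHp q IHq|p IHp q IHq|p IHp q IHq|v p IHp|v p IHp]
  W hW X X' [hXX' hX'X] /=.
- move=> H s' hs'.
  have [s [hs [S1 S2]]] := hX'X s' hs'.
  have [a [b [ha [hb ab]]]] := H s hs; subst b.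
  have hx : x \in W by apply: hW; rewrite !inE eqxx.
  have hy : y \in W by apply: hW; rewrite !inE eqxx orbT.
  have : s x = s y by rewrite ha hb.
  move/(S1 x y hx hy) => e.
  case E: (s' x) => [a'|].
  + by exists a', a'; rewrite -e E.
  + by move: (proj2 (S2 x hx) E); rewrite ha.
- move=> H s' hs'.
  have [s [hs [S1 S2]]] := hX'X s' hs'.
  have [a [b [ha [hb ab]]]] := H s hs.
  have hx : x \in W by apply: hW; rewrite !inE eqxx.
  have hy : y \in W by apply: hW; rewrite !inE eqxx orbT.
  have ne : s' x <> s' y.
    move/(proj2 (S1 x y hx hy)); rewrite ha hb; case; exact: ab.
  case E: (s' x) => [a'|]; last first.
    by move: (proj2 (S2 x hx) E); rewrite ha.
  case F: (s' y) => [b'|]; last first.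
    by move: (proj2 (S2 y hy) F); rewrite hb.
  exists a', b'; split => //; split => //; move=> eab; apply: ne.
  by rewrite E F eab.
- move=> [s hs]; have [s' [hs' _]] := hXX' s hs; by exists s'.
- have hp : {subset vars p <= W} by move=> z hz; apply: hW; rewrite mem_cat hz.
  have hq : {subset vars q <= W} by move=> z hz; apply: hW; rewrite mem_cat hz orbT.
  move=> [h1 h2]; split; [exact: (IHp W hp X) | exact: (IHq W hq X)].
- have hp : {subset vars p <= W} by move=> z hz; apply: hW; rewrite mem_cat hz.
  have hq : {subset vars q <= W} by move=> z hz; apply: hW; rewrite mem_cat hz orbT.
  move=> [Y [Z [hU [hY hZ]]]].
  exists (fun s' => X' s' /\ exists s, Y s /\ sim W s s'),
         (fun s' => X' s' /\ exists s, Z s /\ sim W s s').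
  split; [|split].
  + move=> s'; split.
    * move=> hs'; have [s [hs hss]] := hX'X s' hs'.
      case: (proj1 (hU s) hs) => h; [left|right]; split => //; by exists s.
    * by case=> [[]|[]].
  + apply: (IHp W hp Y) hY; split.
    * move=> s hs; have [s' [hs' hss]] := hXX' s (proj2 (hU s) (or_introl hs)).
      exists s'; split => //; split => //; by exists s.
    * by move=> s' [_ [s [hs hss]]]; exists s.
  + apply: (IHq W hq Z) hZ; split.
    * move=> s hs; have [s' [hs' hss]] := hXX' s (proj2 (hU s) (or_intror hs)).
      exists s'; split => //; split => //; by exists s.
    * by move=> s' [_ [s [hs hss]]]; exists s.
- have hp : {subset vars p <= W} by move=> z hz; apply: hW; rewrite mem_cat hz.
  have hq : {subset vars q <= W} by move=> z hz; apply: hW; rewrite mem_cat hz orbT.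
  case=> h; [left; exact: (IHp W hp X) | right; exact: (IHq W hq X)].
- have hp : {subset vars p <= W} by move=> z hz; apply: hW; rewrite inE hz orbT.
  move=> [F [hF hsat]].
  exists (fun s' m' => exists s m, X s /\ F s m /\ sim W s s' /\
            sim W (upd s v m) (upd s' v m')).
  split.
  + move=> s' hs'; have [s [hs hss]] := hX'X s' hs'.
    have [m hm] := hF s hs.
    have [m' hm'] := @ext _ _ _ v m hss.
    by exists m', s, m.
  + apply: (IHp W hp _) hsat; split.
    * move=> s0 [s [m [hs [hm ->]]]].
      have [s' [hs' hss]] := hXX' s hs.
      have [m' hm'] := @ext _ _ _ v m hss.
      exists (upd s' v m'); split => //.
      exists s', m'; split => //; split => //; by exists s, m.
    * move=> s0 [s' [m' [hs' [[s [m [hs [hm [_ hsim]]]]] ->]]]].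
      exists (upd s v m); split => //; by exists s, m.
- have hp : {subset vars p <= W} by move=> z hz; apply: hW; rewrite inE hz orbT.
  apply: (IHp W hp); split.
  + move=> s0 [s [m [hs ->]]].
    have [s' [hs' hss]] := hXX' s hs.
    have [m' hm'] := @ext _ _ _ v m hss.
    exists (upd s' v m'); split => //; by exists s', m'.
  + move=> s0 [s' [m' [hs' ->]]].
    have [s [hs hss]] := hX'X s' hs'.
    have [m hm] := @ext _ _ _ v m' (@sim_sym _ _ _ hss).
    exists (upd s v m); split; [by exists s, m | exact: sim_sym].
Qed.

Theorem mainTheorem17 :
  forall vs : seq nat, vs != [::] -> uniq vs ->
    ~ definable const_atom vs /\ ~ definable inconst_atom vs.
Proof.
move=> vs hvs _.
pose sk (k : nat) : assignment nat := fun y => if y \in vs then Some k else None.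
pose X1 : team nat := fun s => s = sk 0.
pose X2 : team nat := fun s => s = sk 0 \/ s = sk 1.
have simk : forall W a b, sim W (sk a) (sk b).
  move=> W a b; split => [x y _ _ | x _]; rewrite /sk;
    case: (x \in vs); try case: (y \in vs); split => //; by case.
have ts : forall W, tsim W X1 X2.
  move=> W; split.
  - by move=> s ->; exists (sk 0); split; [left|exact: simk].
  - by move=> s' [->|->]; exists (sk 0); split => //; exact: simk.
have domk : forall k x, (exists a, sk k x = Some a) <-> x \in vs.
  move=> k x; rewrite /sk; case: (x \in vs); split => //.
  + by exists k.
  + by case.
have dom1 : team_dom X1 vs by move=> s ->.
have dom2 : team_dom X2 vs by move=> s [->|->].
have hsub : {subset vs <= vs} by [].
have diff : map (sk 0) vs <> map (sk 1) vs.
  move: hvs; case E: vs => [//|v vs'] _ /=.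
  by rewrite /sk E inE eqxx /=; case.
split; case=> theta [_ H].
- have c1 : const_atom X1 vs by move=> s s' -> ->.
  have s1 := proj2 (H nat (inhabits 0) X1 vs dom1 hsub) c1.
  have s2 := @inv theta (vars theta) (fun z h => h) _ _ (ts (vars theta)) s1.
  have c2 := proj1 (H nat (inhabits 0) X2 vs dom2 hsub) s2.
  by apply: diff; apply: c2; [left|right].
- have c2 : inconst_atom X2 vs by exists (sk 0), (sk 1); split; [left|split; [right|]].
  have s2 := proj2 (H nat (inhabits 0) X2 vs dom2 hsub) c2.
  have s1 := @inv theta (vars theta) (fun z h => h) _ _ (@tsim_sym _ _ _ (ts (vars theta))) s2.
  have [s [s' [-> [-> hne]]]] := proj1 (H nat (inhabits 0) X1 vs dom1 hsub) s1.
  by apply: hne.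
Qed.
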